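(* Let $G=(V,E)$ be a network, $s,t\in V$, and $S\in[S_{min},1]$. Every optimal solution $(\pi_1,\pi_2)$ of the CO-Constrained Survivability Min-QoS problem with bound $S$ is such that all its disjoint segments are shortest disjoint segments.
   Context: A network is a directed graph $G=(V,E)$ with $M=|E|$. Each link $e$ has failure probability $p_e\in(0,p_{max}]$ with $p_{max}<1$, and positive weight $w_e$. Let $S_{min}=(1-p_{max})^M$. Paths are identified with link sets. A survivable connection is a pair $(\pi_1,\pi_2)$ of simple $s$–$t$ paths; the two paths may coincide. Its survivability level is $\prod_{e\in\pi_1\cap\pi_2}(1-p_e)$, equal to $1$ if empty. Its CO-weight is $\sum_{e\in\pi_1\cup\pi_2}w_e$. CO-CSMQ problem: minimize CO-weight subject to survivability level $\ge S$. A survivable connection is viewed as a concatenation of alternating segments: - common segments consist of links common to $\pi_1$ and $\pi_2$; - disjoint segments consist of links exclusive to one of the paths. A disjoint segment with head node $u$ and tail node $v$ is the pair formed by the subpath of $\pi_1$ from $u$ to $v$ and the subpath of $\pi_2$ from $u$ to $v$, which are link-disjoint. The weight of a disjoint segment is the total weight of its links. It is a shortest disjoint segment if its weight is minimum among all pairs of link-disjoint paths from $u$ to $v$ in $G$. *)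

(* Defs.v *)
(* A network: finite node type V, finite link type E with
   source/destination maps (a directed graph, parallel links allowed),
   failure probabilities p and weights w with values in a real field R. *)
From mathcomp Require Import all_boot all_order all_algebra.
Set Implicit Arguments. Unset Strict Implicit. Unset Printing Implicit Defensive.
Import Order.TTheory GRing.Theory Num.Theory.
Local Open Scope ring_scope.

Section Network.
Variables (R : realFieldType) (V E : finType) (src dst : E -> V).

Fixpoint is_walk (x y : V) (q : seq E) : bool :=
  if q is e :: q' then (src e == x) && is_walk (dst e) y q' else x == y.

Definition simple_path (x y : V) (q : seq E) : bool :=
  is_walk x y q && uniq (x :: map dst q).

Definition surv_level (p : E -> R) (pi1 pi2 : seq E) : R :=
  \prod_(e : E | (e \in pi1) && (e \in pi2)) (1 - p e).

Definition co_weight (w : E -> R) (pi1 pi2 : seq E) : R :=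
  \sum_(e : E | (e \in pi1) || (e \in pi2)) w e.

Definition feasible (p : E -> R) (s t : V) (S : R) (pi1 pi2 : seq E) : Prop :=
  [/\ simple_path s t pi1, simple_path s t pi2 & S <= surv_level p pi1 pi2].

Definition optimal (p w : E -> R) (s t : V) (S : R) (pi1 pi2 : seq E) : Prop :=
  feasible p s t S pi1 pi2 /\
  forall r1 r2, feasible p s t S r1 r2 -> co_weight w pi1 pi2 <= co_weight w r1 r2.

Definition ends_common (a pi : seq E) : bool :=
  if rev a is e :: _ then e \in pi else true.
Definition starts_common (b pi : seq E) : bool :=
  if b is e :: _ then e \in pi else true.

(* (q1, q2) is a disjoint segment of (pi1, pi2) with head u and tail v:
   q1 (resp. q2) is the subpath of pi1 (resp. pi2) from u to v, it consists
   of links exclusive to pi1 (resp. pi2), and it is a maximal such run,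
   i.e. it is delimited on both sides by common links (or by s / t). *)
Definition disjoint_segment (pi1 pi2 : seq E) (u v : V) (q1 q2 : seq E) : Prop :=
  exists a1 b1 a2 b2,
    [/\ pi1 = a1 ++ q1 ++ b1, pi2 = a2 ++ q2 ++ b2,
        is_walk u v q1 & is_walk u v q2] /\
    all (fun e => e \notin pi2) q1 /\ all (fun e => e \notin pi1) q2 /\
    [/\ ends_common a1 pi2, ends_common a2 pi1,
        starts_common b1 pi2 & starts_common b2 pi1].

Definition seg_weight (w : E -> R) (q1 q2 : seq E) : R :=
  \sum_(e <- q1) w e + \sum_(e <- q2) w e.

Definition shortest_disjoint_segment (w : E -> R) (u v : V) (q1 q2 : seq E) : Prop :=
  forall r1 r2, simple_path u v r1 -> simple_path u v r2 ->
    all (fun e => e \notin r2) r1 ->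
    seg_weight w q1 q2 <= seg_weight w r1 r2.

End Network.

(* Main.v *)
Require Import Defs.
From mathcomp Require Import all_boot all_order all_algebra ring zify lra.
Import Order.TTheory GRing.Theory Num.Theory.
Local Open Scope ring_scope.

Section Gen.
Set Implicit Arguments. Unset Strict Implicit.
Variables (V T : finType) (sr ds : T -> V).

Lemma walk_cat x y z p q : is_walk sr ds x y p -> is_walk sr ds y z q ->
  is_walk sr ds x z (p ++ q).
Proof.
elim: p x => [|e p IH] x /=; first by move/eqP->.
by case/andP=> -> /IH H /H ->.
Qed.

Lemma walk_split x z p q : is_walk sr ds x z (p ++ q) ->
  exists y, is_walk sr ds x y p /\ is_walk sr ds y z q.
Proof.
elim: p x => [|e p IH] x /=; first by move=> H; exists x; rewrite eqxx.
case/andP=> /eqP <- /IH [y [H1 H2]]; exists y; by rewrite eqxx H1.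
Qed.

Lemma walk_cross (X : {set V}) x y q : is_walk sr ds x y q -> x \in X -> y \notin X ->
  exists2 e, e \in q & (sr e \in X) && (ds e \notin X).
Proof.
elim: q x => [|e q IH] x /=; first by move=> /eqP -> ->.
case/andP=> /eqP Hs Hw Hx Hy.
case: (boolP (ds e \in X)) => Hd.
  by case: (IH _ Hw Hd Hy) => f Hf Hf2; exists f => //; rewrite inE Hf orbT.
by exists e; rewrite ?inE ?eqxx // Hs Hx.
Qed.

Lemma walk_drop x y q z : is_walk sr ds x y q -> z \in x :: map ds q ->
  exists c d l, [/\ q = c ++ d, is_walk sr ds z y d & x :: map ds q = l ++ z :: map ds d].
Proof.
elim: q x => [|e q IH] x /=.
  move=> Hw; rewrite inE => /eqP ->; exists [::], [::], [::]; split => //.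
case/andP=> Hs Hw; rewrite inE; case: (boolP (z == x)) => [/eqP -> _|Hzx /= Hz].
  by exists [::], (e :: q), [::]; rewrite /= Hs Hw.
have [c [d [l [H1 H2 H3]]]] := IH _ Hw Hz.
by exists (e :: c), d, (x :: l); rewrite /= H3 H1.
Qed.

Lemma wshorten x y q : is_walk sr ds x y q ->
  exists2 q', simple_path sr ds x y q' & {subset q' <= q}.
Proof.
elim: q x => [|e q IH] x /=.
  by move=> Hw; exists [::] => //; rewrite /simple_path /= Hw.
case/andP=> Hs Hw.
have [q1 /andP [Hw1 Hu1] Hsub] := IH _ Hw.
case: (boolP (x \in ds e :: map ds q1)) => Hx.
  have [c [d [l [H1 H2 H3]]]] := walk_drop Hw1 Hx.
  exists d.
    rewrite /simple_path H2 /=; move: Hu1; rewrite H3 cat_uniq => /and3P [_ _].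
    by [].
  by move=> f Hf; rewrite inE Hsub ?orbT // H1 mem_cat Hf orbT.
exists (e :: q1).
  rewrite /simple_path /= Hs Hw1 /=; rewrite /= in Hx; rewrite Hx; exact: Hu1.
by move=> f; rewrite !inE => /orP [->|/Hsub ->] //; rewrite orbT.
Qed.

Lemma simple_uniq x y q : simple_path sr ds x y q -> uniq q.
Proof. by case/andP=> _ /= /andP [_ /map_uniq]. Qed.

Definition wgrel (a : pred T) : rel V :=
  fun x y => [exists e, [&& a e, sr e == x & ds e == y]].

Lemma connect_walk (a : pred T) x y : connect (wgrel a) x y ->
  exists2 q, is_walk sr ds x y q & all a q.
Proof.
case/connectP => p; elim: p x => [|z p IH] x /=.
  by move=> _ ->; exists [::] => //=.
case/andP=> /existsP [e /and3P [Ha /eqP Hs /eqP Hd]] Hp Hy.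
have [q Hq Ha'] := IH _ Hp Hy.
by exists (e :: q); rewrite /= ?Hs ?Hd ?eqxx ?Hq ?Ha ?Ha'.
Qed.

Lemma connect_step (a : pred T) x e : connect (wgrel a) x (sr e) -> a e ->
  connect (wgrel a) x (ds e).
Proof.
move=> H Ha; apply: connect_trans H (connect1 _).
by apply/existsP; exists e; rewrite Ha !eqxx.
Qed.

End Gen.


Section Net.
Set Implicit Arguments. Unset Strict Implicit.
Variables (V T : finType) (sr ds : T -> V).

Definition net (g : T -> int) (z : V) : int :=
  \sum_(e | sr e == z) g e - \sum_(e | ds e == z) g e.

Lemma net_ext g h z : (forall e, g e = h e) -> net g z = net h z.
Proof. by move=> H; rewrite /net; congr (_ - _); apply: eq_bigr. Qed.

Lemma netD g h z : net (fun e => g e + h e) z = net g z + net h z.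
Proof. rewrite /net !big_split /=; ring. Qed.

Lemma netB g h z : net (fun e => g e - h e) z = net g z - net h z.
Proof. rewrite /net !sumrB /=; ring. Qed.

Lemma sum_ind (P : pred T) e0 :
  \sum_(e | P e) ((e0 == e) : nat)%:Z = (P e0 : nat)%:Z.
Proof.
case: (boolP (P e0)) => H.
  rewrite (bigD1 e0) //= eqxx big1 ?addr0 // => e /andP [_ He].
  by rewrite eq_sym (negbTE He).
rewrite big1 // => e He; case: eqP => // E; by rewrite E He in H.
Qed.

Lemma net_single e0 z : net (fun e => ((e0 == e) : nat)%:Z) z =
  ((sr e0 == z) : nat)%:Z - ((ds e0 == z) : nat)%:Z.
Proof. by rewrite /net !sum_ind. Qed.

Definition cnt (q : seq T) (e : T) : int := (count_mem e q)%:Z.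

Lemma walk_net x y q z : is_walk sr ds x y q ->
  net (cnt q) z = ((x == z) : nat)%:Z - ((y == z) : nat)%:Z.
Proof.
elim: q x => [|e q IH] x /=.
  move/eqP ->; rewrite /net /cnt big1 ?big1 ?subrr //.
case/andP => /eqP Hs Hw.
rewrite (@net_ext _ (fun e' => ((e == e') : nat)%:Z + cnt q e')); last first.
  by move=> e'; rewrite /cnt /= PoszD.
rewrite netD net_single (IH _ Hw) Hs; ring.
Qed.

Lemma cut_net (X : {set V}) g :
  \sum_(z in X) net g z =
  \sum_(e | (sr e \in X) && (ds e \notin X)) g e -
  \sum_(e | (sr e \notin X) && (ds e \in X)) g e.
Proof.
have part : forall f : T -> V, \sum_(e | f e \in X) g e = \sum_(z in X) \sum_(e | f e == z) g e.
  move=> f; rewrite (partition_big f (mem X)) //.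
  apply: eq_bigr => z Hz; apply: eq_bigl => e.
  by apply/idP/idP => [/andP [] //|/eqP E]; rewrite E eqxx andbT.
rewrite /net sumrB -!part.
rewrite (bigID (fun e => ds e \in X) (fun e => sr e \in X)) /=.
rewrite [X in _ - X](bigID (fun e => sr e \in X) (fun e => ds e \in X)) /=.
have -> : \sum_(i | (ds i \in X) && (sr i \in X)) g i = \sum_(i | (sr i \in X) && (ds i \in X)) g i.
  by apply: eq_bigl => e; rewrite andbC.
have -> : \sum_(i | (ds i \in X) && (sr i \notin X)) g i = \sum_(i | (sr i \notin X) && (ds i \in X)) g i.
  by apply: eq_bigl => e; rewrite andbC.
ring.
Qed.

End Net.


Lemma sum_indV (I : finType) (P : pred I) i0 :
  \sum_(i | P i) ((i0 == i) : nat)%:Z = (P i0 : nat)%:Z.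
Proof.
case: (boolP (P i0)) => H.
  rewrite (bigD1 i0) //= eqxx big1 ?addr0 // => e /andP [_ He].
  by rewrite eq_sym (negbTE He).
rewrite big1 // => e He; case: eqP => // E; by rewrite E He in H.
Qed.

Section Flow.
Set Implicit Arguments. Unset Strict Implicit.
Variables (V T : finType) (sr ds : T -> V).

Lemma dec (g : T -> int) s t (k : int) : s != t -> 0 < k -> (forall e, 0 <= g e) ->
  (forall z, net sr ds g z = k * (((s == z) : nat)%:Z - ((t == z) : nat)%:Z)) ->
  exists2 P, simple_path sr ds s t P & all (fun e => 0 < g e) P.
Proof.
move=> Hst Hk Hg Hnet.
set a := fun e => 0 < g e.
case: (boolP (connect (wgrel sr ds a) s t)) => Hc.
  have [q Hq Ha] := connect_walk Hc; have [P HP Hsub] := wshorten Hq.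
  by exists P => //; apply/allP => e /Hsub He; exact: (allP Ha e He).
exfalso.
pose X := [set z | connect (wgrel sr ds a) s z].
have := cut_net sr ds X g.
rewrite (eq_bigr _ (fun z _ => Hnet z)) -mulr_sumr sumrB !sum_indV.
rewrite !inE connect0 (negbTE Hc) /= subr0 mulr1.
rewrite big1; last first.
  move=> e /andP []; rewrite !inE => H1 H2; apply/eqP; rewrite eq_le Hg andbT.
  by rewrite leNgt; apply: contra H2 => H; exact: connect_step.
move=> Ek; have : 0 <= \sum_(e | (sr e \notin X) && (ds e \in X)) g e.
  by apply: sumr_ge0 => e _.
rewrite sub0r in Ek; by rewrite -oppr_le0 -Ek leNgt Hk.
Qed.

Definition rsr (p : T * bool) := if p.2 then sr p.1 else ds p.1.
Definition rds (p : T * bool) := if p.2 then ds p.1 else sr p.1.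

Lemma rwalk_net x y (A : seq (T * bool)) z : is_walk rsr rds x y A ->
  net sr ds (fun e => (count_mem (e, true) A)%:Z) z -
  net sr ds (fun e => (count_mem (e, false) A)%:Z) z =
  ((x == z) : nat)%:Z - ((y == z) : nat)%:Z.
Proof.
elim: A x => [|[e b] A IH] x /=.
  move/eqP ->; rewrite /net !big1 ?subrr //.
case/andP => /eqP Hs Hw.
rewrite (@net_ext _ _ _ _ (fun e' => (count_mem (e', true) ((e, b) :: A))%:Z)
   (fun e' => ((b && (e == e')) : nat)%:Z + (count_mem (e', true) A)%:Z)); last first.
  by move=> e'; rewrite /= xpair_eqE PoszD; case: b {Hs Hw} => /=; rewrite ?andbT ?andbF.
rewrite (@net_ext _ _ _ _ (fun e' => (count_mem (e', false) ((e, b) :: A))%:Z)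
   (fun e' => ((~~ b && (e == e')) : nat)%:Z + (count_mem (e', false) A)%:Z)); last first.
  by move=> e'; rewrite /= xpair_eqE PoszD; case: b {Hs Hw} => /=; rewrite ?andbT ?andbF.
rewrite !netD.
have H0 : net sr ds (fun e' => ((false && (e == e')) : nat)%:Z) z = 0.
  by rewrite /net !big1 ?subrr.
have H1 : net sr ds (fun e' => ((true && (e == e')) : nat)%:Z) z =
   ((sr e == z) : nat)%:Z - ((ds e == z) : nat)%:Z by exact: net_single.
have := IH _ Hw; rewrite /rsr /rds /= in Hs *.
by case: b Hs Hw H0 H1 => /= Hs Hw H0 H1; rewrite H0 H1 -Hs => E; rewrite opprD addrACA E; ring.
Qed.

End Flow.


Section Two.
Set Implicit Arguments. Unset Strict Implicit.
Variables (V T : finType) (sr ds : T -> V).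

Lemma simple_net x y P z : simple_path sr ds x y P ->
  net sr ds (fun e => ((e \in P) : nat)%:Z) z = ((x == z) : nat)%:Z - ((y == z) : nat)%:Z.
Proof.
move=> HP; rewrite -(walk_net z (proj1 (andP HP))); apply: net_ext => e.
by rewrite /cnt count_uniq_mem // (simple_uniq HP).
Qed.

Lemma two_paths (a : pred T) s t :
 (forall X : {set V}, s \in X -> t \notin X -> exists e1 e2,
    [/\ e1 != e2, a e1 && a e2, (sr e1 \in X) && (ds e1 \notin X) &
        (sr e2 \in X) && (ds e2 \notin X)]) ->
 exists P1 P2, [/\ is_walk sr ds s t P1, is_walk sr ds s t P2, all a P1, all a P2 &
                   all (fun e => e \notin P2) P1].
Proof.
case: (eqVneq s t) => [<- _|Hst Hcut].
  by exists [::], [::]; rewrite /= eqxx.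
have [P0 HP0 HaP0] : exists2 P0, simple_path sr ds s t P0 & all a P0.
  case: (boolP (connect (wgrel sr ds a) s t)) => Hc.
    have [q Hq Ha] := connect_walk Hc; have [P HP Hsub] := wshorten Hq.
    by exists P => //; apply/allP => e /Hsub He; exact: (allP Ha e He).
  pose X := [set z | connect (wgrel sr ds a) s z].
  have [||e1 [e2 [_ /andP [Ha1 _] /andP [H1 H2] _]]] := Hcut X.
  - by rewrite inE connect0.
  - by rewrite inE.
  by move: H1 H2; rewrite !inE => H1; rewrite (connect_step H1 Ha1).
pose ra (p : T * bool) := if p.2 then a p.1 && (p.1 \notin P0) else p.1 \in P0.
pose g0 := fun e => ((e \in P0) : nat)%:Z.
have Hg0 z := simple_net z HP0.
case: (boolP (connect (wgrel (rsr sr ds) (rds sr ds) ra) s t)) => Hc; last first.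
  exfalso.
  pose Y := [set z | connect (wgrel (rsr sr ds) (rds sr ds) ra) s z].
  have := cut_net sr ds Y g0.
  rewrite (eq_bigr _ (fun z _ => Hg0 z)) sumrB !sum_indV !inE connect0 (negbTE Hc) /= subr0.
  rewrite [X in _ - X]big1; last first.
    move=> e /andP []; rewrite !inE => H1 H2; rewrite /g0.
    case: (boolP (e \in P0)) => // He; exfalso; move/negP: H1; apply.
    by apply: (@connect_step _ _ _ _ _ _ (e, false)).
  rewrite subr0.
  have [||e1 [e2 [Hne /andP [Ha1 Ha2] /andP [H1 H2] /andP [H3 H4]]]] := Hcut Y.
  - by rewrite inE connect0.
  - by rewrite inE.
  have Hin : forall e, a e -> sr e \in Y -> ds e \notin Y -> e \in P0.
    move=> e Ha; rewrite !inE => Hs Hd; apply/negPn/negP => He; move/negP: Hd; apply.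
    by apply: (@connect_step _ _ _ _ _ _ (e, true)) => //=; rewrite /ra /= Ha He.
  have E1 := Hin _ Ha1 H1 H2; have E2 := Hin _ Ha2 H3 H4.
  rewrite (bigD1 e1) ?H1 ?H2 //= (bigD1 e2) /=; last by rewrite H3 H4 eq_sym Hne.
  move=> Eq.
  have : 0 <= \sum_(i | ((sr i \in Y) && (ds i \notin Y) && (i != e1)) && (i != e2)) g0 i.
    by apply: sumr_ge0 => e _; rewrite /g0.
  rewrite /g0 E1 E2 in Eq; move: Eq; set S := \sum_(i | _) _; move=> Eq HS.
  clearbody S; move: Eq HS; rewrite /=; lia.
have [A0 HA0 HaA0] := connect_walk Hc.
have [A HA HsubA] := wshorten HA0.
have HuA := simple_uniq HA.
have HraA : forall p, p \in A -> ra p by move=> p Hp; exact: (allP HaA0 p (HsubA p Hp)).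
have Hfw : forall e, (e, true) \in A -> a e && (e \notin P0) by move=> e /HraA.
have Hbw : forall e, (e, false) \in A -> e \in P0 by move=> e /HraA.
pose g1 := fun e => g0 e + (((e, true) \in A) : nat)%:Z - (((e, false) \in A) : nat)%:Z.
have Hnet1 : forall z, net sr ds g1 z = 2%:Z * (((s == z) : nat)%:Z - ((t == z) : nat)%:Z).
  move=> z; rewrite /g1 netB netD Hg0.
  have := rwalk_net z (proj1 (andP HA)).
  have -> : net sr ds (fun e => (count_mem (e, true) A)%:Z) z =
            net sr ds (fun e => (((e, true) \in A) : nat)%:Z) z.
    by apply: net_ext => e; rewrite count_uniq_mem.
  have -> : net sr ds (fun e => (count_mem (e, false) A)%:Z) z =
            net sr ds (fun e => (((e, false) \in A) : nat)%:Z) z.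
    by apply: net_ext => e; rewrite count_uniq_mem.
  move=> E; rewrite -addrA -E; ring.
have Hg1 : forall e, [/\ 0 <= g1 e, g1 e <= 1 & (0 < g1 e -> a e)].
  move=> e; move: (Hfw e) (Hbw e) (allP HaP0 e); rewrite /g1 /g0.
  case: ((e, true) \in A); case: ((e, false) \in A); case: (e \in P0); case: (a e) => H1 H2 H3;
    try (by move: (H1 isT)); try (by move: (H2 isT)); try (by move: (H3 isT)); by [].
clearbody g1.
have [P1 HP1 HaP1] := dec Hst (isT : (0 < 2%:Z)) (fun e => let: And3 h _ _ := Hg1 e in h) Hnet1.
pose g2 := fun e => g1 e - ((e \in P1) : nat)%:Z.
have Hnet2 : forall z, net sr ds g2 z = 1 * (((s == z) : nat)%:Z - ((t == z) : nat)%:Z).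
  by move=> z; rewrite /g2 netB Hnet1 (simple_net z HP1); ring.
have Hg2 : forall e, 0 <= g2 e.
  move=> e; rewrite /g2; case: (boolP (e \in P1)) => He /=.
    by move: (allP HaP1 e He) => /=; lia.
  by rewrite subr0; case: (Hg1 e).
have Eg2 : forall e, g2 e = g1 e - ((e \in P1) : nat)%:Z by [].
clearbody g2.
have [P2 HP2 HaP2] := dec Hst (isT : (0 < 1%:Z)) Hg2 Hnet2.
exists P1, P2; split.
- by case/andP: HP1.
- by case/andP: HP2.
- by apply/allP => e He; case: (Hg1 e) => _ _; apply; exact: (allP HaP1 e He).
- apply/allP => e He; case: (Hg1 e) => _ _; apply; move: (allP HaP2 e He); rewrite Eg2.
  case: (e \in P1) => /=; last by rewrite subr0.
  by rewrite subr_gt0; apply: lt_trans.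
- apply/allP => e He; apply/negP => He2; move: (allP HaP2 e He2); rewrite Eg2 He.
  case: (Hg1 e) => _ H _ /=; rewrite subr_gt0 => H'.
  by have := le_lt_trans H H'; rewrite ltxx.
Qed.
End Two.


Section Sums.
Set Implicit Arguments. Unset Strict Implicit.
Variables (R : numDomainType) (I : finType).

Lemma sum_sub (A B : pred I) (F : I -> R) : (forall i, A i -> B i) -> (forall i, 0 <= F i) ->
  \sum_(i | A i) F i <= \sum_(i | B i) F i.
Proof.
move=> HAB HF; rewrite [X in _ <= X](bigID A) /=.
have -> : \sum_(i | B i && A i) F i = \sum_(i | A i) F i.
  by apply: eq_bigl => i; case: (boolP (A i)) => H; rewrite ?andbT ?andbF ?HAB.
by rewrite lerDl; apply: sumr_ge0.
Qed.

Lemma sum_or_le (A B : pred I) (F : I -> R) : (forall i, 0 <= F i) ->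
  \sum_(i | A i || B i) F i <= \sum_(i | A i) F i + \sum_(i | B i) F i.
Proof.
move=> HF; rewrite (bigID A) /=.
have -> : \sum_(i | (A i || B i) && A i) F i = \sum_(i | A i) F i.
  by apply: eq_bigl => i; rewrite andb_idl // => ->.
rewrite lerD2l; apply: sum_sub => // i /andP [].
by case: (boolP (A i)) => //=.
Qed.

Lemma sum_or_disj (A B : pred I) (F : I -> R) : (forall i, A i -> ~~ B i) ->
  \sum_(i | A i || B i) F i = \sum_(i | A i) F i + \sum_(i | B i) F i.
Proof.
move=> HAB; rewrite (bigID A) /=.
congr (_ + _); apply: eq_bigl => i.
  by rewrite andb_idl // => ->.
by case: (boolP (A i)) => H /=; rewrite ?andbT // (negbTE (HAB _ H)).
Qed.

Lemma prod_sub (A B : pred I) (F : I -> R) : (forall i, A i -> B i) ->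
  (forall i, 0 <= F i <= 1) ->
  \prod_(i | B i) F i <= \prod_(i | A i) F i.
Proof.
move=> HAB HF; rewrite (bigID A) /=.
have -> : \prod_(i | B i && A i) F i = \prod_(i | A i) F i.
  by apply: eq_bigl => i; case: (boolP (A i)) => H; rewrite ?andbT ?andbF ?HAB.
apply: ler_piMr.
  by apply: prodr_ge0 => i _; case/andP: (HF i).
by apply: prodr_ile1 => i _; exact: HF.
Qed.
End Sums.

Section W.
Set Implicit Arguments. Unset Strict Implicit.
Variables (V T : finType) (sr ds : T -> V).

Lemma walk_ends x y x' y' q : is_walk sr ds x y q -> is_walk sr ds x' y' q -> q != [::] ->
  x = x' /\ y = y'.
Proof.
elim: q x x' => [|e q IH] x x' //= /andP [/eqP <- H1] /andP [/eqP -> H2] _; split => //.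
case: q IH H1 H2 => [|f q] IH H1 H2; first by move: H1 H2 => /= /eqP <- /eqP.
by case: (IH _ _ H1 H2).
Qed.

Lemma walk_map x y (P : seq (T * bool)) :
  is_walk (fun p => sr p.1) (fun p => ds p.1) x y P -> is_walk sr ds x y (map fst P).
Proof. by elim: P x => [|p P IH] x //= /andP [-> /IH]. Qed.
Lemma cross_lemma x y a q b u v (X : {set V}) :
  is_walk sr ds x y (a ++ q ++ b) -> is_walk sr ds u v q -> x \in X -> y \notin X ->
  (exists2 e, e \in a ++ b & (sr e \in X) && (ds e \notin X)) \/ (u \in X /\ v \notin X).
Proof.
move=> Hw Hq Hx Hy.
have [m1 [Ha Hqb]] := walk_split Hw; have [m2 [Hq' Hb]] := walk_split Hqb.
case: (boolP (m1 \in X)) => Hm1; last first.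
  have [e He Hc] := walk_cross Ha Hx Hm1.
  by left; exists e => //; rewrite mem_cat He.
case: (boolP (m2 \in X)) => Hm2.
  have [e He Hc] := walk_cross Hb Hm2 Hy.
  by left; exists e => //; rewrite mem_cat He orbT.
right; case: (eqVneq q [::]) => Hq0.
  by move: Hq'; rewrite Hq0 /= => /eqP E; rewrite -E Hm1 in Hm2.
by have [<- <-] := walk_ends Hq' Hq Hq0.
Qed.
End W.

Lemma uniq_mid (T : eqType) (a q b : seq T) e : uniq (a ++ q ++ b) -> e \in a ++ b -> e \notin q.
Proof.
move=> Hu He; have P : perm_eq (a ++ q ++ b) (q ++ a ++ b) by rewrite perm_catCA.
have : uniq (q ++ a ++ b) by rewrite -(perm_uniq P).
by rewrite cat_uniq => /and3P [_ /hasPn H _]; exact: H.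
Qed.



Theorem lemma3 (R : realFieldType) (V E : finType) (src dst : E -> V)
    (p w : E -> R) (pmax : R)
    (hpmax : pmax < 1)
    (hp : forall e, 0 < p e <= pmax)
    (hw : forall e, 0 < w e)
    (s t : V) (S : R)
    (hS : (1 - pmax) ^+ #|E| <= S <= 1)
    (pi1 pi2 : seq E) :
  optimal src dst p w s t S pi1 pi2 ->
  forall (u v : V) (q1 q2 : seq E),
    disjoint_segment src dst pi1 pi2 u v q1 q2 ->
    shortest_disjoint_segment src dst w u v q1 q2.
Proof.
move=> [[HS1 HS2 Hsurv] Hopt] u v q1 q2
  [a1 [b1 [a2 [b2 [[E1 E2 Hq1 Hq2] [Hx1 [Hx2 _]]]]]]] r1 r2 Hr1 Hr2 Hdisj.
rewrite leNgt; apply/negP => Hlt.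
have Hu1 := simple_uniq HS1; have Hu2 := simple_uniq HS2.
have Hur1 := simple_uniq Hr1; have Hur2 := simple_uniq Hr2.
pose U' : pred E := fun e => [|| (e \in pi1) && (e \notin q1), (e \in pi2) && (e \notin q2),
                                 e \in r1 | e \in r2].
pose C : pred E := fun e => (e \in pi1) && (e \in pi2).
pose a : pred (E * bool) := fun p => U' p.1 && (~~ p.2 || C p.1).
have mem1 : forall e, e \in a1 ++ b1 -> (e \in pi1) && (e \notin q1).
  move=> e He; rewrite E1 in Hu1 *; rewrite (uniq_mid Hu1 He) andbT.
  by move: He; rewrite !mem_cat => /orP [->|->]; rewrite ?orbT.
have mem2 : forall e, e \in a2 ++ b2 -> (e \in pi2) && (e \notin q2).
  move=> e He; rewrite E2 in Hu2 *; rewrite (uniq_mid Hu2 He) andbT.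
  by move: He; rewrite !mem_cat => /orP [->|->]; rewrite ?orbT.
have Hcut : forall X : {set V}, s \in X -> t \notin X -> exists e1 e2 : E * bool,
    [/\ e1 != e2, a e1 && a e2, (src e1.1 \in X) && (dst e1.1 \notin X) &
        (src e2.1 \in X) && (dst e2.1 \notin X)].
  move=> X Hs Ht.
  have W1 : is_walk src dst s t (a1 ++ q1 ++ b1) by rewrite -E1; case/andP: HS1.
  have W2 : is_walk src dst s t (a2 ++ q2 ++ b2) by rewrite -E2; case/andP: HS2.
  have rcase : u \in X -> v \notin X -> exists e1 e2 : E * bool,
    [/\ e1 != e2, a e1 && a e2, (src e1.1 \in X) && (dst e1.1 \notin X) &
        (src e2.1 \in X) && (dst e2.1 \notin X)].
    move=> Hu Hv.
    have [f1 Hf1 Hc1] := walk_cross (proj1 (andP Hr1)) Hu Hv.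
    have [f2 Hf2 Hc2] := walk_cross (proj1 (andP Hr2)) Hu Hv.
    exists (f1, false), (f2, false); split => //=.
    - apply/negP => /eqP [] E12; move: (allP Hdisj f1 Hf1); by rewrite E12 Hf2.
    - by rewrite /a /U' /= Hf1 Hf2 !orbT.
  case: (cross_lemma W1 Hq1 Hs Ht) => [[e1 He1 Hc1]|[Hu Hv]]; last exact: rcase.
  case: (cross_lemma W2 Hq2 Hs Ht) => [[e2 He2 Hc2]|[Hu Hv]]; last exact: rcase.
  have M1 := mem1 _ He1; have M2 := mem2 _ He2.
  case: (eqVneq e1 e2) => [E12|N12].
    exists (e1, false), (e1, true); split => //=.
    - by rewrite xpair_eqE eqxx.
    have HU : U' e1 by rewrite /U' M1.
    have HC : C e1 by rewrite /C; case/andP: M1 => -> _; rewrite E12; case/andP: M2.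
    by rewrite /a /= HU HC.
  exists (e1, false), (e2, false); split => //=.
  - by apply/negP => /eqP [] E12; rewrite E12 eqxx in N12.
  - by rewrite /a /U' /= M1 M2 !orbT.
have [P1 [P2 [HP1 HP2 Ha1 Ha2 Hd]]] :=
  @two_paths V _ (fun p : E * bool => src p.1) (fun p : E * bool => dst p.1) a s t Hcut.
have [Q1 HQ1 Hs1] := wshorten (walk_map HP1).
have [Q2 HQ2 Hs2] := wshorten (walk_map HP2).
have inP : forall (P : seq (E * bool)) e, e \in map fst P -> exists b, (e, b) \in P.
  by move=> P e /mapP [[f b] Hp /= ->]; exists b.
have HU1 : forall e, e \in Q1 -> U' e.
  move=> e /Hs1 /inP [b Hb]; by case/andP: (allP Ha1 _ Hb).
have HU2 : forall e, e \in Q2 -> U' e.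
  move=> e /Hs2 /inP [b Hb]; by case/andP: (allP Ha2 _ Hb).
have HC : forall e, (e \in Q1) && (e \in Q2) -> C e.
  move=> e /andP [/Hs1 /inP [b1' Hb1] /Hs2 /inP [b2' Hb2]].
  have Hne : b1' != b2'.
    apply/negP => /eqP E12; rewrite E12 in Hb1; by move: (allP Hd _ Hb1); rewrite Hb2.
  move: (allP Ha1 _ Hb1) (allP Ha2 _ Hb2); rewrite /a /=.
  by case: b1' b2' Hne {Hb1 Hb2} => [] [] //= _; [move=> /andP [_ ->] | move=> _ /andP [_ ->]].
have Hfeas : feasible src dst p s t S Q1 Q2.
  split => //; apply: (le_trans Hsurv); rewrite /surv_level.
  apply: prod_sub => [e|e]; first exact: HC.
  by case/andP: (hp e) => H1 H2; apply/andP; split; lra.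
have := Hopt _ _ Hfeas; apply/negP; rewrite -ltNge.
have hw0 : forall e, 0 <= w e by move=> e; apply: ltW.
pose W : pred E := fun e => ((e \in pi1) || (e \in pi2)) && ~~ ((e \in q1) || (e \in q2)).
have qin1 : forall e, e \in q1 -> e \in pi1 by move=> e He; rewrite E1 !mem_cat He orbT.
have qin2 : forall e, e \in q2 -> e \in pi2 by move=> e He; rewrite E2 !mem_cat He orbT.
have St1 : co_weight w Q1 Q2 <= \sum_(e | U' e) w e.
  apply: sum_sub => // e /orP [/HU1|/HU2] //.
have St2 : \sum_(e | U' e) w e <= \sum_(e | W e || ((e \in r1) || (e \in r2))) w e.
  apply: sum_sub => // e; rewrite /U' /W.
  case/or4P => [/andP [H1 H2]|/andP [H1 H2]|->|->]; rewrite ?orbT //.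
  - have H3 : e \notin q2 by apply/negP => H3; move: (allP Hx2 e H3); rewrite H1.
    by rewrite H1 (negbTE H2) (negbTE H3).
  - have H3 : e \notin q1 by apply/negP => H3; move: (allP Hx1 e H3); rewrite H1.
    by rewrite H1 orbT (negbTE H2) (negbTE H3).
have St3 := sum_or_le W (fun e => (e \in r1) || (e \in r2)) hw0.
have St4 := sum_or_le (fun e => e \in r1) (fun e => e \in r2) hw0.
have Eco : co_weight w pi1 pi2 = \sum_(e | W e) w e + (\sum_(e | e \in q1) w e + \sum_(e | e \in q2) w e).
  rewrite /co_weight (bigID (fun e => (e \in q1) || (e \in q2))) /= addrC; congr (_ + _).
  rewrite -sum_or_disj; last first.
    by move=> e /= H; apply/negP => H'; move: (allP Hx1 e H); rewrite (qin2 _ H').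
  apply: eq_bigl => e; apply/idP/idP => [/andP [_ ->] //|H].
  by rewrite H andbT; case/orP: H => [/qin1 ->|/qin2 ->]; rewrite ?orbT.
have Huq1 : uniq q1 by move: Hu1; rewrite E1 !cat_uniq => /and3P [_ _ /andP [-> _]].
have Huq2 : uniq q2 by move: Hu2; rewrite E2 !cat_uniq => /and3P [_ _ /andP [-> _]].
move: Hlt; rewrite /seg_weight !big_uniq // Eco => Hlt.
move: St1 St2 St3 St4 Hlt.
set x1 := co_weight _ _ _; set x2 := \sum_(e | U' e) w e.
set x3 := \sum_(e | W e || _) w e; set x4 := \sum_(e | W e) w e.
set x5 := \sum_(i | _ || _) w i.
set y1 := \sum_(i in r1) w i; set y2 := \sum_(i in r2) w i.
set z1 := \sum_(i in q1) w i; set z2 := \sum_(i in q2) w i.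
move=> *; lra.
Qed.
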